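(* Let $R$ be a ring, let $\zeta:Q_{0}\to Q_{1}$ be a homomorphism between injective right $R$-modules, let $\zeta^\bullet$ be the complex with $Q_0$ in degree $0$, $Q_1$ in degree $1$ and differential $\zeta$, and let $X^{\bullet}$ be an object of $\mathrm{K}(R)$. Then: (a) If $\mathrm{Hom}_{\mathrm{K}(R)}(X^{\bullet},\zeta^{\bullet})=0$, then $\mathrm{Hom}_{\mathrm{D}(R)}(\tau^{\leq 0}(X^{\bullet}),\zeta^\bullet[i])=0$ for all integers $i\le 0$; (b) If $\mathrm{Hom}_{\mathrm{K}(R)}(X^{\bullet},\zeta^{\bullet}[1])=0$, then $\mathrm{Hom}_{\mathrm{D}(R)}(\tau^{\geq 0}(X^{\bullet}),\zeta^\bullet[i])=0$ for all integers $i\ge 1$.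
   Context: $R$ is a unital associative ring, modules are right $R$-modules, $\mathrm{K}(R)$ and $\mathrm{D}(R)$ are the unbounded homotopy and derived categories of $\mathrm{Mod}(R)$. For a complex $X^\bullet=(X_i,d_i)$, the truncations are $\tau^{\le n}(X^\bullet):\cdots\to X_{n-2}\to X_{n-1}\to \mathrm{Ker}(d_n)\to 0\to\cdots$ and $\tau^{\ge n}(X^\bullet):\cdots\to 0\to X_n/\mathrm{Im}(d_{n-1})\xrightarrow{\overline{d_n}}X_{n+1}\to X_{n+2}\to\cdots$. *)

(* Defs.v *)
(* Right R-modules are modelled as "partial setoid" modules
   (carrier + partial equivalence relation), so that submodules (kernels) and
   quotient modules (cokernels) can be built without proof obligations.  *)
From HB Require Import structures.
From mathcomp Require Import all_boot all_order all_algebra.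
Set Implicit Arguments. Unset Strict Implicit. Unset Printing Implicit Defensive.
Import Order.TTheory GRing.Theory Num.Theory.
Local Open Scope ring_scope.

Section Modules.
Variable R : pzRingType.

Record rmod := RMod {
  car : Type;
  req : car -> car -> Prop;
  radd : car -> car -> car;
  rzero : car;
  ropp : car -> car;
  ract : car -> R -> car }.

(* the elements of M are the x with req x x *)
Definition elt (M : rmod) (x : car M) := req x x.

Definition is_rmod (M : rmod) : Prop :=
  (forall x y : car M, req x y -> req y x) /\
  (forall x y z : car M, req x y -> req y z -> req x z) /\
  elt (rzero M) /\
  (forall x x' y y' : car M, req x x' -> req y y' -> req (radd x y) (radd x' y')) /\
  (forall x x' : car M, req x x' -> req (ropp x) (ropp x')) /\
  (forall (x x' : car M) r, req x x' -> req (ract x r) (ract x' r)) /\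
  (forall x y z : car M, elt x -> elt y -> elt z ->
      req (radd x (radd y z)) (radd (radd x y) z)) /\
  (forall x y : car M, elt x -> elt y -> req (radd x y) (radd y x)) /\
  (forall x : car M, elt x -> req (radd (rzero M) x) x) /\
  (forall x : car M, elt x -> req (radd x (ropp x)) (rzero M)) /\
  (forall (x y : car M) r, elt x -> elt y ->
      req (ract (radd x y) r) (radd (ract x r) (ract y r))) /\
  (forall (x : car M) r s, elt x ->
      req (ract x (r + s)) (radd (ract x r) (ract x s))) /\
  (forall (x : car M) r s, elt x -> req (ract x (r * s)) (ract (ract x r) s)) /\
  (forall x : car M, elt x -> req (ract x 1) x).

Definition is_hom (M N : rmod) (f : car M -> car N) : Prop :=
  [/\ (forall x y, req x y -> req (f x) (f y)),
      (forall x y, elt x -> elt y -> req (f (radd x y)) (radd (f x) (f y))) &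
      (forall x r, elt x -> req (f (ract x r)) (ract (f x) r))].

Definition is_mono (M N : rmod) (f : car M -> car N) : Prop :=
  forall x y, elt x -> elt y -> req (f x) (f y) -> req x y.

Definition injective_mod (Q : rmod) : Prop :=
  forall (M N : rmod) (i : car M -> car N) (g : car M -> car Q),
    is_rmod M -> is_rmod N -> is_hom i -> is_mono i -> is_hom g ->
    exists h : car N -> car Q, is_hom h /\ forall x, elt x -> req (h (i x)) (g x).

Definition zero_mod : rmod :=
  @RMod unit (fun _ _ => True) (fun _ _ => tt) tt (fun _ => tt) (fun _ _ => tt).

(* complexes: differential d i j : X i -> X j, required to vanish unless j = i+1 *)
Record cplx := Cplx {
  cobj : int -> rmod;
  cdif : forall i j : int, car (cobj i) -> car (cobj j) }.
Arguments cobj c _ : clear implicits.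
Arguments cdif c i j _ : clear implicits.

Definition is_complex (X : cplx) : Prop :=
  [/\ (forall n, is_rmod (cobj X n)),
      (forall i j, is_hom (cdif X i j)),
      (forall i j (x : car (cobj X i)), j <> i + 1 -> elt x -> req (cdif X i j x) (rzero _)) &
      (forall i j k (x : car (cobj X i)), elt x -> req (cdif X j k (cdif X i j x)) (rzero _))].

Definition cmap (X Y : cplx) := forall n, car (cobj X n) -> car (cobj Y n).

Definition is_chain (X Y : cplx) (f : cmap X Y) : Prop :=
  (forall n, is_hom (f n)) /\
  (forall i j (x : car (cobj X i)), elt x -> req (f j (cdif X i j x)) (cdif Y i j (f i x))).

Definition null_homotopic (X Y : cplx) (f : cmap X Y) : Prop :=
  exists h : forall i j, car (cobj X i) -> car (cobj Y j),
    (forall i j, is_hom (h i j)) /\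
    forall n (x : car (cobj X n)), elt x ->
      req (f n x) (radd (cdif Y (n - 1) n (h n (n - 1) x)) (h (n + 1) n (cdif X n (n + 1) x))).

Definition cycle (X : cplx) n (x : car (cobj X n)) :=
  elt x /\ req (cdif X n (n + 1) x) (rzero _).

Definition boundary (X : cplx) n (x : car (cobj X n)) :=
  exists z : car (cobj X (n - 1)), elt z /\ req x (cdif X (n - 1) n z).

(* quasi-isomorphism: bijective on all cohomology modules *)
Definition quasi_iso (X Y : cplx) (s : cmap X Y) : Prop :=
  forall n,
    (forall y : car (cobj Y n), cycle y ->
       exists x : car (cobj X n), cycle x /\
         boundary (radd (s n x) (ropp y) : car (cobj Y n))) /\
    (forall x : car (cobj X n), cycle x -> boundary (s n x) -> boundary x).

Definition cmap_comp (X Y Z : cplx) (f : cmap Y Z) (t : cmap X Y) : cmap X Z :=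
  fun n x => f n (t n x).

Definition HomK_zero (X Y : cplx) : Prop :=
  forall f : cmap X Y, is_chain f -> null_homotopic f.

(* Hom_{D(R)}(A, B) = 0 : every morphism of D(R), i.e. every roof
   A <-s- A' -f-> B with s a quasi-isomorphism (the morphism f s^-1), is zero,
   i.e. f becomes zero after precomposing with some quasi-isomorphism. *)
Definition HomD_zero (A B : cplx) : Prop :=
  forall (A' : cplx) (s : cmap A' A) (f : cmap A' B),
    is_complex A' -> is_chain s -> is_chain f -> quasi_iso s ->
    exists (A'' : cplx) (t : cmap A'' A'),
      [/\ is_complex A'', is_chain t, quasi_iso t & null_homotopic (cmap_comp f t)].

Definition shift (X : cplx) (i : int) : cplx :=
  @Cplx (fun n => cobj X (n + i))
        (fun m n x => if odd `|i|%N then ropp (cdif X (m + i) (n + i) x)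
                      else cdif X (m + i) (n + i) x).

Definition restrict (M : rmod) (e : car M -> car M -> Prop) : rmod :=
  @RMod (car M) e (@radd M) (rzero M) (@ropp M) (@ract M).

(* tau^{<=0}: ... -> X_{-2} -> X_{-1} -> Ker d_0 -> 0 -> ... *)
Definition trunc_le0 (X : cplx) : cplx :=
  @Cplx (fun n => restrict (fun x y : car (cobj X n) =>
           let P := fun z : car (cobj X n) =>
             if n < 0 then True
             else if n == 0 then req (cdif X n (n + 1) z) (rzero _)
             else req z (rzero _) in
           [/\ req x y, P x & P y]))
        (cdif X).

(* tau^{>=0}: ... -> 0 -> X_0 / Im d_{-1} -> X_1 -> X_2 -> ... *)
Definition trunc_ge0 (X : cplx) : cplx :=
  @Cplx (fun n => restrict (fun x y : car (cobj X n) =>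
           if n < 0 then req x (rzero _) /\ req y (rzero _)
           else if n == 0 then
             [/\ elt x, elt y &
                 exists z : car (cobj X (n - 1)),
                   elt z /\ req (radd x (ropp y)) (cdif X (n - 1) n z)]
           else req x y))
        (cdif X).

Definition zeta_obj (Q0 Q1 : rmod) (n : int) : rmod :=
  match n with
  | Posz 0 => Q0
  | Posz 1 => Q1
  | _ => zero_mod
  end.

Definition zeta_dif (Q0 Q1 : rmod) (zeta : car Q0 -> car Q1) (i j : int) :
    car (zeta_obj Q0 Q1 i) -> car (zeta_obj Q0 Q1 j) :=
  match i as i0, j as j0
    return car (zeta_obj Q0 Q1 i0) -> car (zeta_obj Q0 Q1 j0) with
  | Posz 0, Posz 1 => zeta
  | _, j0 => fun _ => rzero (zeta_obj Q0 Q1 j0)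
  end.

Definition zeta_cplx (Q0 Q1 : rmod) (zeta : car Q0 -> car Q1) : cplx :=
  @Cplx (zeta_obj Q0 Q1) (zeta_dif zeta).

End Modules.

(* Main.v *)
Require Import Defs.
From mathcomp Require Import all_boot all_order all_algebra.
From mathcomp Require Import zify.
Set Implicit Arguments. Unset Strict Implicit. Unset Printing Implicit Defensive.
Local Open Scope ring_scope.

Section Alg.
Context {R : pzRingType} {M : rmod R}.
Hypothesis HM : is_rmod M.
Implicit Types x y z a b c d : car M.

Lemma msym x y : req x y -> req y x. Proof. by case: HM => H _; apply: H. Qed.
Lemma mtrans x y z : req x y -> req y z -> req x z.
Proof. by case: HM => _ [] H _; apply: H. Qed.
Lemma meltl x y : req x y -> elt x.
Proof. by move=> h; apply: (mtrans h); apply: msym. Qed.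
Lemma meltr x y : req x y -> elt y.
Proof. by move=> h; apply: meltl (msym h). Qed.
Lemma m0 : elt (rzero M). Proof. by case: HM => _ [] _ []. Qed.
Lemma maddE x x' y y' : req x x' -> req y y' -> req (radd x y) (radd x' y').
Proof. by case: HM => _ [] _ [] _ [] H _; apply: H. Qed.
Lemma moppE x x' : req x x' -> req (ropp x) (ropp x').
Proof. by case: HM => _ [] _ [] _ [] _ [] H _; apply: H. Qed.
Lemma mactE x x' r : req x x' -> req (ract x r) (ract x' r).
Proof. by case: HM => _ [] _ [] _ [] _ [] _ [] H _; apply: H. Qed.
Lemma maddA x y z : elt x -> elt y -> elt z -> req (radd x (radd y z)) (radd (radd x y) z).
Proof. by case: HM => _ [] _ [] _ [] _ [] _ [] _ [] H _; apply: H. Qed.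
Lemma maddC x y : elt x -> elt y -> req (radd x y) (radd y x).
Proof. by case: HM => _ [] _ [] _ [] _ [] _ [] _ [] _ [] H _; apply: H. Qed.
Lemma madd0l x : elt x -> req (radd (rzero M) x) x.
Proof. by case: HM => _ [] _ [] _ [] _ [] _ [] _ [] _ [] _ [] H _; apply: H. Qed.
Lemma maddN x : elt x -> req (radd x (ropp x)) (rzero M).
Proof. by case: HM => _ [] _ [] _ [] _ [] _ [] _ [] _ [] _ [] _ [] H _; apply: H. Qed.
Lemma mactD x y r : elt x -> elt y -> req (ract (radd x y) r) (radd (ract x r) (ract y r)).
Proof. by case: HM => _ [] _ [] _ [] _ [] _ [] _ [] _ [] _ [] _ [] _ [] H _; apply: H. Qed.
Lemma mactDr x r s : elt x -> req (ract x (r + s)) (radd (ract x r) (ract x s)).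
Proof. by case: HM => _ [] _ [] _ [] _ [] _ [] _ [] _ [] _ [] _ [] _ [] _ [] H _; apply: H. Qed.

Lemma meltD x y : elt x -> elt y -> elt (radd x y). Proof. exact: maddE. Qed.
Lemma meltN x : elt x -> elt (ropp x). Proof. exact: moppE. Qed.
Lemma meltA x r : elt x -> elt (ract x r). Proof. exact: mactE. Qed.
Lemma mrefl x : elt x -> req x x. Proof. by []. Qed.

Lemma madd0r x : elt x -> req (radd x (rzero M)) x.
Proof. move=> ex; apply: mtrans (maddC ex m0) (madd0l ex). Qed.
Lemma maddNl x : elt x -> req (radd (ropp x) x) (rzero M).
Proof. move=> ex; apply: mtrans (maddC (meltN ex) ex) (maddN ex). Qed.
Lemma mcancel a b c : elt a -> elt b -> elt c -> req (radd a b) (radd a c) -> req b c.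
Proof.
move=> ea eb ec h.
apply: mtrans (msym (madd0l eb)) _.
apply: mtrans (maddE (msym (maddNl ea)) eb) _.
apply: mtrans (msym (maddA (meltN ea) ea eb)) _.
apply: mtrans (maddE (meltN ea) h) _.
apply: mtrans (maddA (meltN ea) ea ec) _.
apply: mtrans (maddE (maddNl ea) ec) _.
exact: madd0l.
Qed.
Lemma mopp_uniq a b : elt a -> elt b -> req (radd a b) (rzero M) -> req b (ropp a).
Proof.
move=> ea eb h; apply: (mcancel ea eb (meltN ea)).
apply: mtrans h (msym (maddN ea)).
Qed.
Lemma mopp0 : req (ropp (rzero M)) (rzero M).
Proof. apply: mtrans (msym (madd0l (meltN m0))) (maddN m0). Qed.
Lemma msub_eq0 x y : elt x -> elt y -> req (radd x (ropp y)) (rzero M) -> req x y.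
Proof.
move=> ex ey h.
have := mopp_uniq (meltN ey) ex; rewrite /= => /(_ (mtrans (maddC (meltN ey) ex) h)) h2.
apply: mtrans h2 _.
apply: msym; apply: mopp_uniq (meltN ey) ey (maddNl ey).
Qed.
Lemma msubrr x y : req x y -> req (radd x (ropp y)) (rzero M).
Proof.
move=> h; apply: mtrans (maddE h (meltN (meltr h))) (maddN (meltr h)).
Qed.
Lemma maddACA a b c d : elt a -> elt b -> elt c -> elt d ->
  req (radd (radd a b) (radd c d)) (radd (radd a c) (radd b d)).
Proof.
move=> ea eb ec ed.
apply: mtrans (msym (maddA ea eb (meltD ec ed))) _.
apply: mtrans (maddE ea (maddA eb ec ed)) _.
apply: mtrans (maddE ea (maddE (maddC eb ec) ed)) _.
apply: mtrans (maddE ea (msym (maddA ec eb ed))) _.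
exact: maddA ea ec (meltD eb ed).
Qed.
Lemma moppD x y : elt x -> elt y -> req (ropp (radd x y)) (radd (ropp x) (ropp y)).
Proof.
move=> ex ey; apply: msym; apply: mopp_uniq (meltD ex ey) (meltD (meltN ex) (meltN ey)) _.
apply: mtrans (maddACA ex ey (meltN ex) (meltN ey)) _.
apply: mtrans (maddE (maddN ex) (maddN ey)) (madd0l m0).
Qed.
Lemma msubD x y x' y' : elt x -> elt y -> elt x' -> elt y' ->
  req (radd (radd x y) (ropp (radd x' y'))) (radd (radd x (ropp x')) (radd y (ropp y'))).
Proof.
move=> ex ey ex' ey'.
apply: mtrans (maddE (meltD ex ey) (moppD ex' ey')) _.
exact: maddACA ex ey (meltN ex') (meltN ey').
Qed.
Lemma mact0 r : req (ract (rzero M) r) (rzero M).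
Proof.
have e0 := meltA r m0.
apply: msym; apply: (mcancel e0 m0 e0).
apply: mtrans (madd0r e0) _.
apply: mtrans (mactE r (msym (madd0l m0))) _.
exact: mactD m0 m0.
Qed.
Lemma mactN x r : elt x -> req (ract (ropp x) r) (ropp (ract x r)).
Proof.
move=> ex; apply: mopp_uniq (meltA r ex) (meltA r (meltN ex)) _.
apply: mtrans (msym (mactD r ex (meltN ex))) _.
apply: mtrans (mactE r (maddN ex)) (mact0 r).
Qed.
Lemma maddr_sub x y z : elt x -> elt y -> elt z -> req x (radd z (ropp y)) -> req (radd x y) z.
Proof.
move=> ex ey ez h.
apply: mtrans (maddE h ey) _.
apply: mtrans (msym (maddA ez (meltN ey) ey)) _.
apply: mtrans (maddE ez (maddNl ey)) (madd0r ez).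
Qed.
Lemma msub_add x y z : elt x -> elt y -> elt z -> req (radd x y) z -> req x (radd z (ropp y)).
Proof.
move=> ex ey ez h.
apply: mtrans (msym (madd0r ex)) _.
apply: mtrans (maddE ex (msym (maddN ey))) _.
apply: mtrans (maddA ex ey (meltN ey)) _.
exact: maddE h (meltN ey).
Qed.
End Alg.

Section Hom.
Context {R : pzRingType} {M N : rmod R}.
Hypotheses (HM : is_rmod M) (HN : is_rmod N).

Definition addtv (f : car M -> car N) :=
  (forall x y, req x y -> req (f x) (f y)) /\
  (forall x y, elt x -> elt y -> req (f (radd x y)) (radd (f x) (f y))).

Lemma hom_additive f : is_hom f -> addtv f.
Proof. by case. Qed.

Variable f : car M -> car N.
Hypothesis Hf : addtv f.
Lemma aE x y : req x y -> req (f x) (f y). Proof. by case: Hf => H _; apply: H. Qed.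
Lemma aelt x : elt x -> elt (f x). Proof. exact: aE. Qed.
Lemma aD x y : elt x -> elt y -> req (f (radd x y)) (radd (f x) (f y)).
Proof. by case: Hf => _ H; apply: H. Qed.
Lemma a0 : req (f (rzero M)) (rzero N).
Proof.
have e := aelt (m0 HM).
apply: (msym HN); apply: (mcancel HN e (m0 HN) e).
refine (mtrans HN (madd0r HN e) _).
refine (mtrans HN (aE (msym HM (madd0l HM (m0 HM)))) _).
exact: aD (m0 HM) (m0 HM).
Qed.
Lemma aN x : elt x -> req (f (ropp x)) (ropp (f x)).
Proof.
move=> ex; refine (mopp_uniq HN (aelt ex) (aelt (meltN HM ex)) _).
refine (mtrans HN (msym HN (aD ex (meltN HM ex))) _).
exact: (mtrans HN (aE (maddN HM ex)) a0).
Qed.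
Lemma aB x y : elt x -> elt y -> req (f (radd x (ropp y))) (radd (f x) (ropp (f y))).
Proof.
move=> ex ey; refine (mtrans HN (aD ex (meltN HM ey)) _).
exact: (maddE HN (aelt ex) (aN ey)).
Qed.
Lemma aeq0 x : req x (rzero M) -> req (f x) (rzero N).
Proof. move=> h; exact: (mtrans HN (aE h) a0). Qed.
End Hom.

Section Homs.
Context {R : pzRingType}.

Lemma homE (M N : rmod R) (f : car M -> car N) (x y : car M) : is_hom f -> req x y -> req (f x) (f y).
Proof. by case=> h _ _; apply: h. Qed.
Lemma homelt (M N : rmod R) (f : car M -> car N) (x : car M) : is_hom f -> elt x -> elt (f x).
Proof. by case=> h _ _; apply: h. Qed.

Lemma hom_zero (M N : rmod R) : is_rmod N -> is_hom (fun _ : car M => rzero N).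
Proof.
move=> HN; split=> [x y _|x y _ _|x r _]; first exact: (m0 HN).
  exact: (msym HN (madd0l HN (m0 HN))).
exact: (msym HN (mact0 HN r)).
Qed.

Lemma hom_comp (M N P : rmod R) (f : car M -> car N) (g : car N -> car P) :
  is_rmod M -> is_rmod N -> is_rmod P -> is_hom f -> is_hom g -> is_hom (fun x => g (f x)).
Proof.
move=> HM HN HP [f1 f2 f3] [g1 g2 g3]; split.
- by move=> x y h; apply: g1; apply: f1.
- move=> x y ex ey; refine (mtrans HP (g1 _ _ (f2 _ _ ex ey)) _).
  exact: (g2 _ _ (f1 _ _ ex) (f1 _ _ ey)).
- move=> x r ex; refine (mtrans HP (g1 _ _ (f3 _ r ex)) _).
  exact: (g3 _ r (f1 _ _ ex)).
Qed.

Lemma hom_sum (M N : rmod R) (f g : car M -> car N) :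
  is_rmod M -> is_rmod N -> is_hom f -> is_hom g -> is_hom (fun x => radd (f x) (g x)).
Proof.
move=> HM HN [f1 f2 f3] [g1 g2 g3]; split.
- by move=> x y h; apply: (maddE HN); [apply: f1|apply: g1].
- move=> x y ex ey.
  have efx := f1 _ _ ex; have efy := f1 _ _ ey; have egx := g1 _ _ ex; have egy := g1 _ _ ey.
  refine (mtrans HN (maddE HN (f2 _ _ ex ey) (g2 _ _ ex ey)) _).
  exact: (maddACA HN efx efy egx egy).
- move=> x r ex.
  have efx := f1 _ _ ex; have egx := g1 _ _ ex.
  refine (mtrans HN (maddE HN (f3 _ r ex) (g3 _ r ex)) _).
  exact: (msym HN (mactD HN r efx egx)).
Qed.

Lemma hom_opp (M N : rmod R) (f : car M -> car N) :
  is_rmod M -> is_rmod N -> is_hom f -> is_hom (fun x => ropp (f x)).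
Proof.
move=> HM HN [f1 f2 f3]; split.
- by move=> x y h; apply: (moppE HN); apply: f1.
- move=> x y ex ey.
  refine (mtrans HN (moppE HN (f2 _ _ ex ey)) _).
  exact: (moppD HN (f1 _ _ ex) (f1 _ _ ey)).
- move=> x r ex.
  refine (mtrans HN (moppE HN (f3 _ r ex)) _).
  exact: (msym HN (mactN HN r (f1 _ _ ex))).
Qed.

Lemma restrict_rmod (M : rmod R) (e : car M -> car M -> Prop) : is_rmod M ->
  (forall x y, e x y -> e y x) -> (forall x y z, e x y -> e y z -> e x z) ->
  (forall x y, e x y -> elt x) ->
  (forall x y, req x y -> e x x -> e y y -> e x y) ->
  e (rzero M) (rzero M) ->
  (forall x x' y y', e x x' -> e y y' -> e (radd x y) (radd x' y')) ->
  (forall x x', e x x' -> e (ropp x) (ropp x')) ->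
  (forall x x' r, e x x' -> e (ract x r) (ract x' r)) ->
  is_rmod (restrict e).
Proof.
move=> HM es et ee er e0 eD eN eA.
have el : forall x, e x x -> elt x by move=> x /ee.
rewrite /is_rmod /elt /restrict /=.
split; first exact: es. split; first exact: et. split; first exact: e0.
split; first exact: eD. split; first exact: eN. split; first exact: eA.
have cl : forall x y, e x x -> e y y -> e (radd x y) (radd x y) by move=> *; apply: eD.
have cN : forall x, e x x -> e (ropp x) (ropp x) by move=> *; apply: eN.
have cA : forall x r, e x x -> e (ract x r) (ract x r) by move=> *; apply: eA.
have eM : forall x, e x x -> elt x by move=> x /ee.
case: (HM) => _ [] _ [] _ [] _ [] _ [] _ [] hA [] hC [] h0 [] hN [] hD [] hDr [] hM h1.
split. move=> x y z ex ey ez; apply: er; [|repeat first [ eassumption | eapply cl | eapply cN | eapply cA | eapply e0 ]|repeat first [ eassumption | eapply cl | eapply cN | eapply cA | eapply e0 ]]; apply: hA; exact: eM.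
split. move=> x y ex ey; apply: er; [|repeat first [ eassumption | eapply cl | eapply cN | eapply cA | eapply e0 ]|repeat first [ eassumption | eapply cl | eapply cN | eapply cA | eapply e0 ]]; apply: hC; exact: eM.
split. move=> x ex; apply: er; [|repeat first [ eassumption | eapply cl | eapply cN | eapply cA | eapply e0 ]|repeat first [ eassumption | eapply cl | eapply cN | eapply cA | eapply e0 ]]; apply: h0; exact: eM.
split. move=> x ex; apply: er; [|repeat first [ eassumption | eapply cl | eapply cN | eapply cA | eapply e0 ]|repeat first [ eassumption | eapply cl | eapply cN | eapply cA | eapply e0 ]]; apply: hN; exact: eM.
split. move=> x y r ex ey; apply: er; [|repeat first [ eassumption | eapply cl | eapply cN | eapply cA | eapply e0 ]|repeat first [ eassumption | eapply cl | eapply cN | eapply cA | eapply e0 ]]; apply: hD; exact: eM.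
split. move=> x r s ex; apply: er; [|repeat first [ eassumption | eapply cl | eapply cN | eapply cA | eapply e0 ]|repeat first [ eassumption | eapply cl | eapply cN | eapply cA | eapply e0 ]]; apply: hDr; exact: eM.
split. move=> x r s ex; apply: er; [|repeat first [ eassumption | eapply cl | eapply cN | eapply cA | eapply e0 ]|repeat first [ eassumption | eapply cl | eapply cN | eapply cA | eapply e0 ]]; apply: hM; exact: eM.
move=> x ex; apply: er; [|repeat first [ eassumption | eapply cl | eapply cN | eapply cA | eapply e0 ]|repeat first [ eassumption | eapply cl | eapply cN | eapply cA | eapply e0 ]]; apply: h1; exact: eM.
Qed.

Lemma hom_restrict (M N : rmod R) (e : car M -> car M -> Prop) (e' : car N -> car N -> Prop)
  (f : car M -> car N) :
  is_rmod M -> is_rmod N ->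
  (forall x y, e x y -> elt x) ->
  (forall x y, req x y -> e' x x -> e' y y -> e' x y) ->
  (forall x x' y y', e' x x' -> e' y y' -> e' (radd x y) (radd x' y')) ->
  (forall x x' r, e' x x' -> e' (ract x r) (ract x' r)) ->
  is_hom f -> (forall x y, e x y -> e' (f x) (f y)) ->
  (forall x y, e x x -> e y y -> e (radd x y) (radd x y)) ->
  (forall x r, e x x -> e (ract x r) (ract x r)) ->
  @is_hom R (restrict e) (restrict e') f.
Proof.
move=> HM HN ee er eD eA [f1 f2 f3] fe cD cA; split => /=.
- exact: fe.
- move=> x y ex ey; apply: er; first by apply: f2; [exact: (ee _ _ ex)|exact: (ee _ _ ey)].
    exact: (fe _ _ (cD _ _ ex ey)).
  exact: (eD _ _ _ _ (fe _ _ ex) (fe _ _ ey)).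
- move=> x r ex; apply: er; first by apply: f3; apply: (ee _ _ ex).
    exact: (fe _ _ (cA _ r ex)).
  exact: (eA _ _ r (fe _ _ ex)).
Qed.
End Homs.

Notation dd A i j := (@cdif _ A i j).
Section Ext.
Context {R : pzRingType}.

Lemma ext_lemma (M0 N Q : rmod R) (D : car M0 -> Prop) (i : car M0 -> car N) (g : car M0 -> car Q) :
  is_rmod M0 -> is_rmod N -> is_rmod Q -> injective_mod Q -> is_hom i -> is_hom g ->
  D (rzero M0) -> (forall x y, elt x -> elt y -> D x -> D y -> D (radd x y)) ->
  (forall x, elt x -> D x -> D (ropp x)) -> (forall x r, elt x -> D x -> D (ract x r)) ->
  (forall x y, elt x -> elt y -> D x -> D y -> req (i x) (i y) -> req (g x) (g y)) ->
  exists h : car N -> car Q, is_hom h /\ forall x, elt x -> D x -> req (h (i x)) (g x).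
Proof.
move=> HM HN HQ injQ ih gh D0 DD DN DA gw.
have [i1 i2 i3] := ih; have [g1 g2 g3] := gh.
pose e := fun x y : car M0 => [/\ elt x, elt y, D x, D y & req (i x) (i y)].
have HMe : is_rmod (restrict e).
  apply: restrict_rmod => //.
  - by move=> x y [] *; split => //; apply: (msym HN).
  - by move=> x y z [] ? ? ? ? h1 [] ? ? ? ? h2; split => //; apply: (mtrans HN h1 h2).
  - by move=> x y [].
  - move=> x y h [] ? ? ? ? ? [] ? ? ? ? ?; split => //; exact: i1.
  - by split => //; try exact: (m0 HM); apply: i1; exact: (m0 HM).
  - move=> x x' y y' [] ex ex' Dx Dx' hx [] ey ey' Dy Dy' hy; split.
    + exact: (meltD HM ex ey).
    + exact: (meltD HM ex' ey').
    + exact: DD.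
    + exact: DD.
    + refine (mtrans HN (i2 _ _ ex ey) _).
      refine (mtrans HN (maddE HN hx hy) _).
      exact: (msym HN (i2 _ _ ex' ey')).
  - move=> x x' [] ex ex' Dx Dx' hx; split.
    + exact: (meltN HM ex).
    + exact: (meltN HM ex').
    + exact: DN.
    + exact: DN.
    + refine (mtrans HN (aN HM HN (hom_additive ih) ex) _).
      refine (mtrans HN (moppE HN hx) _).
      exact: (msym HN (aN HM HN (hom_additive ih) ex')).
  - move=> x x' r [] ex ex' Dx Dx' hx; split.
    + exact: (meltA HM r ex).
    + exact: (meltA HM r ex').
    + exact: DA.
    + exact: DA.
    + refine (mtrans HN (i3 _ r ex) _).
      refine (mtrans HN (mactE HN r hx) _).
      exact: (msym HN (i3 _ r ex')).
have ihe : @is_hom R (restrict e) N i.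
  split => /=.
  - by move=> x y [].
  - by move=> x y [] ex _ _ _ _ [] ey _ _ _ _; apply: i2.
  - by move=> x r [] ex _ _ _ _; apply: i3.
have ime : @is_mono R (restrict e) N i.
  by move=> x y [] ex _ Dx _ _ [] ey _ Dy _ _ h; split.
have ghe : @is_hom R (restrict e) Q g.
  split => /=.
  - by move=> x y [] ex ey Dx Dy h; apply: gw.
  - by move=> x y [] ex _ _ _ _ [] ey _ _ _ _; apply: g2.
  - by move=> x r [] ex _ _ _ _; apply: g3.
have [h [hh hp]] := injQ (restrict e) N i g HMe HN ihe ime ghe.
exists h; split => // x ex Dx; apply: hp.
by split => //; apply: i1.
Qed.

Lemma ext_d (A : cplx R) (n : int) (Q : rmod R) (g : car (cobj A n) -> car Q) :
  is_complex A -> is_rmod Q -> injective_mod Q -> is_hom g ->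
  (forall x, Defs.cycle x -> req (g x) (rzero Q)) ->
  exists h : car (cobj A (n + 1)) -> car Q, is_hom h /\
    forall x, elt x -> req (h (dd A n (n + 1) x)) (g x).
Proof.
move=> [HA Hd _ _] HQ injQ gh gz.
have HM := HA n; have HN := HA (n + 1).
have gw : forall x y, elt x -> elt y -> True -> True -> req (dd A n (n + 1) x) (dd A n (n + 1) y) -> req (g x) (g y).
  move=> x y ex ey _ _ hxy.
  have gad := hom_additive gh.
  have dad := hom_additive (Hd n (n + 1)).
  apply: (msub_eq0 HQ (aelt gad ex) (aelt gad ey)).
  refine (mtrans HQ (msym HQ (aB HM HQ gad ex ey)) _).
  apply: gz; split; first exact: (meltD HM ex (meltN HM ey)).
  refine (mtrans HN (aB HM HN dad ex ey) _).
  exact: (msubrr HN hxy).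
have [h [hh hp]] := @ext_lemma (cobj A n) (cobj A (n + 1)) Q (fun _ => True) (dd A n (n + 1)) g
  HM HN HQ injQ (Hd _ _) gh I (fun _ _ _ _ _ _ => I) (fun _ _ _ => I) (fun _ _ _ _ => I) gw.
by exists h; split => // x ex; apply: hp.
Qed.
End Ext.

Import GRing.Theory Num.Theory.

Section Null.
Context {R : pzRingType}.
Definition triv (M : rmod R) := forall a b : car M, req a b.

Variables (A Y : cplx R) (p : int).
Variables (H0 : car (cobj A (p + 1)) -> car (cobj Y p))
          (H1 : car (cobj A (p + 1 + 1)) -> car (cobj Y (p + 1))).

Definition Hh (i j : int) (x : car (cobj A i)) : car (cobj Y j) :=
  match i =P p + 1, j =P p with
  | ReflectT e1, ReflectT e2 =>
      eq_rect p (fun k => car (cobj Y k))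
        (H0 (eq_rect i (fun k => car (cobj A k)) x (p + 1) e1)) j (esym e2)
  | _, _ =>
    match i =P p + 1 + 1, j =P p + 1 with
    | ReflectT e1, ReflectT e2 =>
      eq_rect (p + 1) (fun k => car (cobj Y k))
        (H1 (eq_rect i (fun k => car (cobj A k)) x (p + 1 + 1) e1)) j (esym e2)
    | _, _ => rzero _
    end
  end.

Arguments Hh : clear implicits.
Lemma Hh0 x : Hh (p + 1) p x = H0 x.
Proof.
rewrite /Hh; case: eqP => [e1|ne]; last by case: ne.
case: eqP => [e2|ne]; last by case: ne.
by rewrite (eq_irrelevance e1 erefl) (eq_irrelevance e2 erefl).
Qed.

Lemma Hh1 x : Hh (p + 1 + 1) (p + 1) x = H1 x.
Proof.
rewrite /Hh; case: eqP => [e1|_].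
  by exfalso; move: e1; lia.
case: eqP => [e1|ne]; last by case: ne.
case: eqP => [e2|ne]; last by case: ne.
by rewrite (eq_irrelevance e1 erefl) (eq_irrelevance e2 erefl).
Qed.

Lemma Hh_other i j x : i <> p + 1 -> i <> p + 1 + 1 -> Hh i j x = rzero _.
Proof.
move=> n1 n2; rewrite /Hh; case: eqP => [//|_]; by case: eqP.
Qed.

Lemma Hh_hom i j : is_complex A -> is_complex Y -> is_hom H0 -> is_hom H1 -> is_hom (Hh i j).
Proof.
move=> [HA _ _ _] [HY _ _ _] h0 h1; rewrite /Hh.
case: eqP => [e1|_].
  case: eqP => [e2|_].
    by subst i j.
  case: eqP => [e1'|_]; last exact: (hom_zero _ (HY _)).
  case: eqP => [e2|_]; last exact: (hom_zero _ (HY _)).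
  by exfalso; lia.
case: eqP => [e1|_]; last exact: (hom_zero _ (HY _)).
case: eqP => [e2|_]; last exact: (hom_zero _ (HY _)).
by subst i j.
Qed.

Lemma null_two (f : cmap A Y) :
  is_complex A -> is_complex Y -> is_hom H0 -> is_hom H1 ->
  (forall n, n <> p -> n <> p + 1 -> triv (cobj Y n)) ->
  (forall x, elt x -> req (f p x) (H0 (@cdif _ A p (p + 1) x))) ->
  (forall x, elt x -> req (f (p + 1) x)
       (radd (@cdif _ Y p (p + 1) (H0 x)) (H1 (@cdif _ A (p + 1) (p + 1 + 1) x)))) ->
  null_homotopic f.
Proof.
move=> cA cY h0 h1 tr c1 c2.
have [HA dA _ _] := cA; have [HY dY _ _] := cY.
exists Hh; split; first by move=> i j; apply: Hh_hom.
move=> n x ex.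
have [e|np] := eqVneq n p; first subst n.
  rewrite Hh0 Hh_other; first last.
  - lia.
  - lia.
  have e0 := aeq0 (HY _) (HY _) (hom_additive (dY (p - 1) p)) (m0 (HY (p - 1))).
  refine (mtrans (HY p) (c1 _ ex) _).
  refine (mtrans (HY p) (msym (HY p) (madd0l (HY p) (aelt (hom_additive h0) (aelt (hom_additive (dA _ _)) ex)))) _).
  apply: (maddE (HY p) (msym (HY p) e0)).
  exact: (aelt (hom_additive h0) (aelt (hom_additive (dA _ _)) ex)).
have [e|np1] := eqVneq n (p + 1); first subst n.
  rewrite addrK Hh0 Hh1; exact: c2.
by apply: tr; apply/eqP.
Qed.
End Null.

Section Zeta.
Context {R : pzRingType}.

Lemma zero_rmod : is_rmod (zero_mod R).
Proof. by do 13 split. Qed.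
Lemma zero_triv : triv (zero_mod R).
Proof. by []. Qed.

Variables (Q0 Q1 : rmod R) (zeta : car Q0 -> car Q1).
Hypotheses (HQ0 : is_rmod Q0) (HQ1 : is_rmod Q1) (Hz : is_hom zeta).

Lemma zeta_obj_rmod n : is_rmod (zeta_obj Q0 Q1 n).
Proof. by case: n => [[|[|k]]|k] //=; exact: zero_rmod. Qed.

Lemma zeta_complex : is_complex (zeta_cplx zeta).
Proof.
split.
- exact: zeta_obj_rmod.
- move=> i j; case: i => [[|[|i]]|i]; case: j => [[|[|j]]|j] /=;
    try exact: Hz; apply: hom_zero; first [exact: zero_rmod | exact: HQ0 | exact: HQ1].
- move=> i j; case: i => [[|[|i]]|i]; case: j => [[|[|j]]|j] //= x ne _;
    first [exact: (m0 zero_rmod) | exact: (m0 HQ0) | exact: (m0 HQ1) | lia].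
- move=> i j k; case: i => [[|[|i]]|i]; case: j => [[|[|j]]|j]; case: k => [[|[|k]]|k] /= x ex;
    first [exact: (m0 zero_rmod) | exact: (m0 HQ0) | exact: (m0 HQ1) | exact: (a0 HQ0 HQ1 (hom_additive Hz))].
Qed.

Lemma shift_complex (X : cplx R) (i : int) : is_complex X -> is_complex (shift X i).
Proof.
move=> [HX dX zX ddX]; split => /=.
- by move=> n; apply: HX.
- move=> m n; case: (odd _); last exact: dX.
  by apply: hom_opp => //; apply: dX.
- move=> m n x ne ex.
  have h : req (@cdif _ X (m + i) (n + i) x) (rzero _) by apply: zX => //; move=> e; apply: ne; lia.
  case: (odd _) => //; refine (mtrans (HX _) (moppE (HX _) h) _); exact: (mopp0 (HX _)).
- move=> m n k x ex.
  have h := ddX _ (n + i) (k + i) x ex.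
  case: (odd _) => //.
  refine (mtrans (HX _) (moppE (HX _) (aN (HX _) (HX _) (hom_additive (dX _ _)) (aelt (hom_additive (dX _ _)) ex))) _).
  refine (mtrans (HX _) (moppE (HX _) (moppE (HX _) h)) _).
  refine (mtrans (HX _) (moppE (HX _) (mopp0 (HX _))) _).
  exact: (mopp0 (HX _)).
Qed.

Lemma shift_zeta_triv (i n : int) : n <> - i -> n <> - i + 1 ->
  triv (cobj (shift (zeta_cplx zeta) i) n).
Proof.
move=> n1 n2 /=.
have : n + i <> 0 by lia.
have : n + i <> 1 by lia.
case: (n + i) => [[|[|k]]|k] //=.
Qed.

Lemma shift_zeta_p (i : int) : cobj (shift (zeta_cplx zeta) i) (- i) = Q0.
Proof. by rewrite /= addNr. Qed.
Lemma shift_zeta_p1 (i : int) : cobj (shift (zeta_cplx zeta) i) (- i + 1) = Q1.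
Proof. by rewrite /= addrAC addNr add0r. Qed.
End Zeta.

Section Ker.
Context {R : pzRingType} {M N : rmod R}.
Hypotheses (HM : is_rmod M) (HN : is_rmod N).
Variable g : car M -> car N.
Hypothesis hg : is_hom g.
Let ga := hom_additive hg.
Lemma ker0 : req (g (rzero M)) (rzero N). Proof using HM HN hg. exact: (a0 HM HN ga). Qed.
Lemma kerE x y : req x y -> req (g x) (rzero N) -> req (g y) (rzero N).
Proof using HM HN hg. move=> h h1; exact: (mtrans HN (aE ga (msym HM h)) h1). Qed.
Lemma kerD x y : elt x -> elt y -> req (g x) (rzero N) -> req (g y) (rzero N) ->
  req (g (radd x y)) (rzero N).
Proof using HM HN hg.
move=> ex ey h1 h2; refine (mtrans HN (aD ga ex ey) _).
refine (mtrans HN (maddE HN h1 h2) _); exact: (madd0l HN (m0 HN)).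
Qed.
Lemma kerN x : elt x -> req (g x) (rzero N) -> req (g (ropp x)) (rzero N).
Proof using HM HN hg.
move=> ex h1; refine (mtrans HN (aN HM HN ga ex) _).
refine (mtrans HN (moppE HN h1) _); exact: (mopp0 HN).
Qed.
Lemma kerA x r : elt x -> req (g x) (rzero N) -> req (g (ract x r)) (rzero N).
Proof using HM HN hg.
move=> ex h1; case: hg => _ _ h3; refine (mtrans HN (h3 _ r ex) _).
refine (mtrans HN (mactE HN r h1) _); exact: (mact0 HN r).
Qed.
End Ker.

Lemma hom_id {R : pzRingType} (M : rmod R) : is_rmod M -> is_hom (fun x : car M => x).
Proof.
move=> HM; split => //.
- move=> x y ex ey; exact: (meltD HM ex ey).
- move=> x r ex; exact: (meltA HM r ex).
Qed.

Section Le.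
Context {R : pzRingType} (X : cplx R).
Hypothesis cX : is_complex X.

Definition Ple (n : int) (z : car (cobj X n)) : Prop :=
  if n < 0 then True else if n == 0 then req (@cdif _ X n (n + 1) z) (rzero _)
  else req z (rzero _).

Lemma le0_req n (x y : car (cobj X n)) :
  @req _ (cobj (trunc_le0 X) n) x y = [/\ req x y, Ple x & Ple y].
Proof. by []. Qed.

Let HX := let: And4 h _ _ _ := cX in h.
Let dX := let: And4 _ h _ _ := cX in h.
Let zX := let: And4 _ _ h _ := cX in h.
Let ddX := let: And4 _ _ _ h := cX in h.

Lemma Ple0 n : Ple (rzero (cobj X n)).
Proof.
rewrite /Ple; case: ifP => // _; case: ifP => _.
  exact: (ker0 (HX _) (HX _) (dX _ _)).
exact: (m0 (HX _)).
Qed.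
Lemma PleE n (x y : car (cobj X n)) : req x y -> Ple x -> Ple y.
Proof.
rewrite /Ple => h; case: ifP => // _; case: ifP => _.
  exact: (kerE (HX _) (HX _) (dX _ _) h).
exact: (kerE (HX _) (HX _) (hom_id (HX _)) h).
Qed.
Lemma PleD n (x y : car (cobj X n)) : elt x -> elt y -> Ple x -> Ple y -> Ple (radd x y).
Proof.
rewrite /Ple => ex ey; case: ifP => // _; case: ifP => _.
  exact: (kerD (HX _) (HX _) (dX _ _) ex ey).
exact: (kerD (HX _) (HX _) (hom_id (HX _)) ex ey).
Qed.
Lemma PleN n (x : car (cobj X n)) : elt x -> Ple x -> Ple (ropp x).
Proof.
rewrite /Ple => ex; case: ifP => // _; case: ifP => _.
  exact: (kerN (HX _) (HX _) (dX _ _) ex).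
exact: (kerN (HX _) (HX _) (hom_id (HX _)) ex).
Qed.
Lemma PleA n (x : car (cobj X n)) r : elt x -> Ple x -> Ple (ract x r).
Proof.
rewrite /Ple => ex; case: ifP => // _; case: ifP => _.
  exact: (kerA (HX _) (HX _) (dX _ _) r ex).
exact: (kerA (HX _) (HX _) (hom_id (HX _)) r ex).
Qed.
Lemma Ple_d i j (x : car (cobj X i)) : elt x -> Ple x -> Ple (@cdif _ X i j x).
Proof.
move=> ex; rewrite {2}/Ple; case: ifP => // jn; case: ifP => [/eqP j0 _|j0].
  by subst j; exact: ddX.
have jp : 0 < j by lia.
have [e|ne] := eqVneq j (i + 1); last first.
  have ne' : j <> i + 1 by move=> e; move: ne; rewrite e eqxx.
  by move=> _; exact (zX ne' ex).
subst j; rewrite /Ple; case: ifP => [|i0]; first by lia.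
case: ifP => [/eqP i00|ip].
  by subst i.
move=> h; exact: (aeq0 (HX _) (HX _) (hom_additive (dX _ _)) h).
Qed.


Definition Ele n (x y : car (cobj X n)) := [/\ req x y, Ple x & Ple y].
Lemma Ele_sym n (x y : car (cobj X n)) : Ele x y -> Ele y x.
Proof. by case=> h a b; split => //; exact: (msym (HX _) h). Qed.
Lemma Ele_trans n (x y z : car (cobj X n)) : Ele x y -> Ele y z -> Ele x z.
Proof. by case=> h a b [] h' a' b'; split => //; exact: (mtrans (HX _) h h'). Qed.
Lemma Ele_elt n (x y : car (cobj X n)) : Ele x y -> elt x.
Proof. by case=> h _ _; exact: (meltl (HX _) h). Qed.
Lemma Ele_er n (x y : car (cobj X n)) : req x y -> Ele x x -> Ele y y -> Ele x y.
Proof. by move=> h [] _ a _ [] _ b _. Qed.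
Lemma Ele_0 n : Ele (rzero (cobj X n)) (rzero _).
Proof. split; [exact: (m0 (HX _))|exact: Ple0|exact: Ple0]. Qed.
Lemma Ele_D n (x x' y y' : car (cobj X n)) : Ele x x' -> Ele y y' -> Ele (radd x y) (radd x' y').
Proof.
move=> [hx a a'] [hy b b']; split; first exact: (maddE (HX _) hx hy).
  exact: (PleD (meltl (HX _) hx) (meltl (HX _) hy) a b).
exact: (PleD (meltr (HX _) hx) (meltr (HX _) hy) a' b').
Qed.
Lemma Ele_N n (x x' : car (cobj X n)) : Ele x x' -> Ele (ropp x) (ropp x').
Proof.
move=> [hx a a']; split; first exact: (moppE (HX _) hx).
  exact: (PleN (meltl (HX _) hx) a).
exact: (PleN (meltr (HX _) hx) a').
Qed.
Lemma Ele_A n (x x' : car (cobj X n)) r : Ele x x' -> Ele (ract x r) (ract x' r).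
Proof.
move=> [hx a a']; split; first exact: (mactE (HX _) r hx).
  exact: (PleA r (meltl (HX _) hx) a).
exact: (PleA r (meltr (HX _) hx) a').
Qed.
Lemma Ele_d i j (x y : car (cobj X i)) : Ele x y -> Ele (@cdif _ X i j x) (@cdif _ X i j y).
Proof.
move=> [h a b]; split; first by case: (dX i j) => h1 _ _; exact: h1.
  exact: (Ple_d _ (meltl (HX _) h) a).
exact: (Ple_d _ (meltr (HX _) h) b).
Qed.

Lemma trunc_le0_rmod n : is_rmod (cobj (trunc_le0 X) n).
Proof.
apply: (@restrict_rmod R (cobj X n) (@Ele n)).
- exact: HX.
- exact: Ele_sym.
- exact: Ele_trans.
- exact: Ele_elt.
- exact: Ele_er.
- exact: Ele_0.
- exact: Ele_D.
- exact: Ele_N.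
- exact: Ele_A.
Qed.

Lemma trunc_le0_complex : is_complex (trunc_le0 X).
Proof.
split.
- exact: trunc_le0_rmod.
- move=> i j; apply: (@hom_restrict R (cobj X i) (cobj X j) (@Ele i) (@Ele j)).
  + exact: HX.
  + exact: HX.
  + exact: Ele_elt.
  + exact: Ele_er.
  + exact: Ele_D.
  + exact: Ele_A.
  + exact: dX.
  + exact: Ele_d.
  + by move=> x y a b; apply: Ele_D.
  + by move=> x r a; apply: Ele_A.
- move=> i j x ne [h a _]; split; [exact (zX ne h)|exact: Ple_d|exact: Ple0].
- move=> i j k x [h a _]; split; first exact (ddX j k h).
    by apply: Ple_d; [exact: (aelt (hom_additive (dX _ _)) h)|exact: Ple_d].
  exact: Ple0.
Qed.

Lemma Ple_neg n (z : car (cobj X n)) : n < 0 -> Ple z.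
Proof. by rewrite /Ple => ->. Qed.
Lemma Ple_pos n (z : car (cobj X n)) : 0 < n -> Ple z -> req z (rzero _).
Proof. rewrite /Ple => np; case: ifP; first by lia. by case: ifP; first by move/eqP=> e; lia. Qed.
Lemma Ple_zero (z : car (cobj X 0)) : Ple z -> req (@cdif _ X 0 (0 + 1) z) (rzero _).
Proof. by []. Qed.

Definition tid : cmap (trunc_le0 X) X := fun n x => x.

Lemma tid_chain : is_chain tid.
Proof.
split.
- move=> n; split => /=.
  + by move=> x y [].
  + move=> x y ex ey; exact: (meltD (HX _) (Ele_elt ex) (Ele_elt ey)).
  + move=> x r ex; exact: (meltA (HX _) r (Ele_elt ex)).
- move=> i j x ex; exact: (aelt (hom_additive (dX _ _)) (Ele_elt ex)).
Qed.

Lemma tid_qiso : (forall n, 0 < n -> forall y : car (cobj X n), Defs.cycle y -> boundary y) ->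
  quasi_iso tid.
Proof.
move=> acyc n; split.
- move=> y [ey dy].
  have [np|nn] := ltrP 0 n.
  + have [z [ez hz]] := acyc n np y (conj ey dy).
    exists (rzero _); split.
      split; first exact: Ele_0.
      split; [exact: (a0 (HX _) (HX _) (hom_additive (dX _ _)))|exact: Ple_d _ (m0 (HX _)) (Ple0 _)|exact: Ple0].
    exists (ropp z); split; first exact: (meltN (HX _) ez).
    rewrite /tid.
    refine (mtrans (HX _) (madd0l (HX _) (meltN (HX _) ey)) _).
    refine (mtrans (HX _) (moppE (HX _) hz) _).
    exact: (msym (HX _) (aN (HX _) (HX _) (hom_additive (dX _ _)) ez)).
  + have Py : Ple y.
      rewrite /Ple; case: ifP => // h1; case: ifP => [/eqP e|h2]; last by lia.
      by subst n.
    exists y; split.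
      split; first by split.
      split; [exact: dy|exact: (Ple_d _ ey Py)|exact: Ple0].
    exists (rzero _); split; first exact: (m0 (HX _)).
    refine (mtrans (HX _) (maddN (HX _) ey) _).
    exact: (msym (HX _) (a0 (HX _) (HX _) (hom_additive (dX _ _)))).
- move=> x [[_ Px _] _] [z [ez hz]].
  have [np|nn] := ltrP 0 n.
  + exists (rzero _); split; first exact: Ele_0.
    split; last exact: (Ple_d _ (m0 (HX _)) (Ple0 _)).
      refine (mtrans (HX _) (Ple_pos np Px) _).
      exact: (msym (HX _) (a0 (HX _) (HX _) (hom_additive (dX _ _)))).
    exact: Px.
  + have Pz : Ple z by apply: Ple_neg; lia.
    exists z; split; first by split.
    split => //; exact: (Ple_d _ ez Pz).
Qed.
End Le.

Section Quot.
Context {R : pzRingType} {M P : rmod R}.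
Hypotheses (HM : is_rmod M) (HP : is_rmod P).
Variable b : car P -> car M.
Hypothesis hb : is_hom b.
Let ba := hom_additive hb.

Definition qrel (x y : car M) :=
  [/\ elt x, elt y & exists z, elt z /\ req (radd x (ropp y)) (b z)].

Lemma mopp_opp (x : car M) : elt x -> req (ropp (ropp x)) x.
Proof using HM.
move=> ex; apply: (msym HM); apply: (mopp_uniq HM (meltN HM ex) ex).
exact: (maddNl HM ex).
Qed.

Lemma mopp_sub (x y : car M) : elt x -> elt y ->
  req (ropp (radd x (ropp y))) (radd y (ropp x)).
Proof using HM.
move=> ex ey; refine (mtrans HM (moppD HM ex (meltN HM ey)) _).
refine (mtrans HM (maddC HM (meltN HM ex) (meltN HM (meltN HM ey))) _).
exact: (maddE HM (mopp_opp ey) (meltN HM ex)).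
Qed.

Lemma msub_trans (x y z : car M) : elt x -> elt y -> elt z ->
  req (radd (radd x (ropp y)) (radd y (ropp z))) (radd x (ropp z)).
Proof using HM.
move=> ex ey ez.
refine (mtrans HM (msym HM (maddA HM ex (meltN HM ey) (meltD HM ey (meltN HM ez)))) _).
apply: (maddE HM ex).
refine (mtrans HM (maddA HM (meltN HM ey) ey (meltN HM ez)) _).
refine (mtrans HM (maddE HM (maddNl HM ey) (meltN HM ez)) _).
exact: (madd0l HM (meltN HM ez)).
Qed.

Lemma qrel_rmod : is_rmod (restrict qrel).
Proof using HM HP hb.
apply: restrict_rmod => //.
- move=> x y [ex ey [z [ez h]]]; split => //; exists (ropp z); split; first exact: (meltN HP ez).
  refine (mtrans HM (msym HM (mopp_sub ex ey)) _).
  refine (mtrans HM (moppE HM h) _).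
  exact: (msym HM (aN HP HM ba ez)).
- move=> x y z [ex ey [u [eu h]]] [_ ez [v [ev h']]]; split => //; exists (radd u v).
  split; first exact: (meltD HP eu ev).
  refine (mtrans HM (msym HM (msub_trans ex ey ez)) _).
  refine (mtrans HM (maddE HM h h') _).
  exact: (msym HM (aD ba eu ev)).
- by move=> x y [].
- move=> x y h _ _; split; [exact: (meltl HM h)|exact: (meltr HM h)|].
  exists (rzero P); split; first exact: (m0 HP).
  refine (mtrans HM (msubrr HM h) _); exact: (msym HM (a0 HP HM ba)).
- split; [exact: (m0 HM)|exact: (m0 HM)|].
  exists (rzero P); split; first exact: (m0 HP).
  refine (mtrans HM (maddN HM (m0 HM)) _); exact: (msym HM (a0 HP HM ba)).
- move=> x x' y y' [ex ex' [u [eu h]]] [ey ey' [v [ev h']]]; split;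
    [exact: (meltD HM ex ey)|exact: (meltD HM ex' ey')|].
  exists (radd u v); split; first exact: (meltD HP eu ev).
  refine (mtrans HM (msubD HM ex ey ex' ey') _).
  refine (mtrans HM (maddE HM h h') _).
  exact: (msym HM (aD ba eu ev)).
- move=> x x' [ex ex' [u [eu h]]]; split; [exact: (meltN HM ex)|exact: (meltN HM ex')|].
  exists (ropp u); split; first exact: (meltN HP eu).
  refine (mtrans HM (msym HM (moppD HM ex (meltN HM ex'))) _).
  refine (mtrans HM (moppE HM h) _).
  exact: (msym HM (aN HP HM ba eu)).
- move=> x x' r [ex ex' [u [eu h]]]; split; [exact: (meltA HM r ex)|exact: (meltA HM r ex')|].
  exists (ract u r); split; first exact: (meltA HP r eu).
  refine (mtrans HM (maddE HM (mrefl (meltA HM r ex)) (msym HM (mactN HM r ex'))) _).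
  refine (mtrans HM (msym HM (mactD HM r ex (meltN HM ex'))) _).
  refine (mtrans HM (mactE HM r h) _).
  by case: hb => _ _ h3; exact: (msym HM (h3 _ r eu)).
Qed.

Lemma qrel_of_req (x y : car M) : req x y -> qrel x y.
Proof using HM HP hb.
move=> h; split; [exact: (meltl HM h)|exact: (meltr HM h)|].
exists (rzero P); split; first exact: (m0 HP).
refine (mtrans HM (msubrr HM h) _); exact: (msym HM (a0 HP HM ba)).
Qed.

Lemma hom_of_qhom (Q : rmod R) (phi : car M -> car Q) :
  @is_hom R (restrict qrel) Q phi -> is_hom phi.
Proof using HM HP hb.
move=> [p1 p2 p3]; split.
- by move=> x y h; apply: p1; apply: qrel_of_req.
- move=> x y ex ey; apply: p2; exact: qrel_of_req.
- move=> x r ex; apply: p3; exact: qrel_of_req.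
Qed.

Lemma qhom_kills (Q : rmod R) (phi : car M -> car Q) : is_rmod Q ->
  @is_hom R (restrict qrel) Q phi -> forall z, elt z -> req (phi (b z)) (rzero Q).
Proof using HM HP hb.
move=> HQ ph z ez.
have pa : @addtv R (restrict qrel) Q phi by apply: hom_additive.
refine (mtrans HQ (aE pa (x:=b z) (y:=rzero M) _) (a0 qrel_rmod HQ pa)).
split; [exact: (aelt ba ez)|exact: (m0 HM)|].
exists z; split => //.
refine (mtrans HM (maddE HM (aelt ba ez) (mopp0 HM)) _).
exact: (madd0r HM (aelt ba ez)).
Qed.

Lemma qhom_of_hom (Q : rmod R) (phi : car M -> car Q) : is_rmod Q -> is_hom phi ->
  (forall z, elt z -> req (phi (b z)) (rzero Q)) -> @is_hom R (restrict qrel) Q phi.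
Proof using HM HP hb.
move=> HQ ph kz; have pa := hom_additive ph; split => /=.
- move=> x y [ex ey [z [ez h]]].
  apply: (msub_eq0 HQ (aelt pa ex) (aelt pa ey)).
  refine (mtrans HQ (msym HQ (aB HM HQ pa ex ey)) _).
  refine (mtrans HQ (aE pa h) _); exact: kz.
- by move=> x y [ex _ _] [ey _ _]; case: ph => _ h _; apply: h.
- by move=> x r [ex _ _]; case: ph => _ _ h; apply: h.
Qed.
End Quot.

Unset Implicit Arguments.
Section PartA.
Context {R : pzRingType} (Q0 Q1 : rmod R) (zeta : car Q0 -> car Q1) (X B : cplx R).
Hypotheses (HQ0 : is_rmod Q0) (HQ1 : is_rmod Q1) (iQ0 : injective_mod Q0)
  (iQ1 : injective_mod Q1) (hz : is_hom zeta) (cX : is_complex X) (cB : is_complex B).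
Variables (s : cmap B (trunc_le0 X)) (f : cmap B (shift (zeta_cplx zeta) 0)).
Hypotheses (cs : is_chain s) (cf : is_chain f) (qs : quasi_iso s)
  (hK : HomK_zero X (zeta_cplx zeta)).

Let HX := let: And4 h _ _ _ := cX in h.
Let dX := let: And4 _ h _ _ := cX in h.
Let zX := let: And4 _ _ h _ := cX in h.
Let ddX := let: And4 _ _ _ h := cX in h.
Let HB := let: And4 h _ _ _ := cB in h.
Let dB := let: And4 _ h _ _ := cB in h.
Let zB := let: And4 _ _ h _ := cB in h.

Let N := restrict (@qrel _ (cobj X 0) (cobj X (0 - 1)) (@cdif _ X (0 - 1) 0)).
Let HN : is_rmod N := qrel_rmod (HX _) (HX _) (dX _ _).

Lemma partA0 (x0 : car (cobj B 0)) : Defs.cycle x0 -> req (f 0 x0 : car Q0) (rzero Q0).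
Proof.
have [hs sch] := cs; have [hf fch] := cf.
have hsN : @is_hom R (cobj B 0) N (s 0).
  have [s1 s2 s3] := hs 0; split.
  - move=> x y h; case: (s1 _ _ h) => h' _ _; exact (qrel_of_req (HX 0) (HX (0-1)) (dX (0-1) 0) h').
  - move=> x y ex ey; case: (s2 _ _ ex ey) => h' _ _; exact (qrel_of_req (HX 0) (HX (0-1)) (dX (0-1) 0) h').
  - move=> x r ex; case: (s3 _ r ex) => h' _ _; exact (qrel_of_req (HX 0) (HX (0-1)) (dX (0-1) 0) h').
have hf0 : @is_hom R (cobj B 0) Q0 (f 0) := hf 0.
pose D := fun x : car (cobj B 0) => req (@cdif _ B 0 (0 + 1) x) (rzero _).
have [phi [hphi ephi]] : exists phi : car N -> car Q0, is_hom phi /\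
    forall x, elt x -> D x -> req (phi (s 0 x)) (f 0 x).
  apply: (@ext_lemma R (cobj B 0) N Q0 D (s 0) (f 0)) => //.
  - exact: (ker0 (HB _) (HB _) (dB _ _)).
  - by move=> x y ex ey; apply: (kerD (HB _) (HB _) (dB _ _)).
  - by move=> x ex; apply: (kerN (HB _) (HB _) (dB _ _)).
  - by move=> x r ex; apply: (kerA (HB _) (HB _) (dB _ _)).
  move=> x y ex ey Dx Dy hxy.
  pose u := radd x (ropp y).
  have eu : elt u := meltD (HB _) ex (meltN (HB _) ey).
  have Du : D u.
    by apply: (kerD (HB _) (HB _) (dB _ _)) => //; [exact: (meltN (HB _) ey)|apply: (kerN (HB _) (HB _) (dB _ _))].
  have hsu : req (s 0 u : car N) (rzero N).
    refine (mtrans HN (aB (HB _) HN (hom_additive hsN) ex ey) _).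
    exact: (msubrr HN hxy).
  case: hsu => esu _ [w [ew hw]].
  have hw' : req (s 0 u : car (cobj X 0)) (@cdif _ X (0 - 1) 0 w).
    refine (mtrans (HX _) _ hw).
    refine (mtrans (HX _) (msym (HX _) (madd0r (HX _) esu)) _).
    exact: (maddE (HX _) esu (msym (HX _) (mopp0 (HX _)))).
  have [v [ev hv]] : boundary u.
    apply: (proj2 (qs 0)); first by split.
    exists w; split; first by split => //; apply: Ple_neg.
    have es : elt (s 0 u : car (cobj (trunc_le0 X) 0)) by case: (hs 0) => h1 _ _; exact: h1.
    case: es => _ Ps _; split => //.
    exact (Ple_d cX 0 ew (Ple_neg w isT)).
  apply: (msub_eq0 HQ0 (aelt (hom_additive hf0) ex) (aelt (hom_additive hf0) ey)).
  refine (mtrans HQ0 (msym HQ0 (aB (HB _) HQ0 (hom_additive hf0) ex ey)) _).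
  refine (mtrans HQ0 (aE (hom_additive hf0) hv) _).
  exact: (fch _ 0 v ev).
move=> [ex0 dx0].
have hphiX : @is_hom R (cobj X 0) Q0 phi := hom_of_qhom (HX 0) (HX (0-1)) (dX (0-1) 0) hphi.
have phiA := hom_additive hphiX.
have hzphi : @is_hom R (cobj X 0) Q1 (fun x => zeta (phi x)) := hom_comp (HX 0) HQ0 HQ1 hphiX hz.
have [psi [hpsi epsi]] : exists psi : car (cobj X (0 + 1)) -> car Q1, is_hom psi /\
    forall x, elt x -> req (psi (@cdif _ X 0 (0 + 1) x)) (zeta (phi x)).
  apply: (ext_d cX HQ1 iQ1 hzphi).
  move=> z [ez dz].
  have cz : @Defs.cycle _ (trunc_le0 X) 0 z.
    split; first by split.
    split; [exact dz|exact (Ple_d cX (0 + 1) ez dz)|exact (Ple0 cX (0 + 1))].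
  have [x [[ex dx] [w [ew hw]]]] := proj1 (qs 0) z cz.
  case: ew => ew _ _; case: hw => hw _ _.
  have hq : @req _ N (s 0 x) z.
    split => //; first by case: (homelt (hs 0) ex).
    by exists w.
  have e1 : req (phi z) (f 0 x).
    refine (mtrans HQ0 (msym HQ0 (aE (hom_additive hphi) hq)) _).
    exact: (ephi x ex dx).
  refine (mtrans HQ1 (homE hz e1) _).
  refine (mtrans HQ1 (msym HQ1 (fch 0 1 x ex)) _).
  exact: (aeq0 (HB _) HQ1 (hom_additive (hf 1)) dx).
pose F : cmap X (zeta_cplx zeta) := fun n =>
  match n as n0 return car (cobj X n0) -> car (zeta_obj Q0 Q1 n0) with
  | Posz O => phi
  | Posz (S O) => psi
  | _ => fun _ => rzero _
  end.
have P1 : forall i (x : car (cobj X i)), elt x -> req (phi (@cdif _ X i 0 x)) (rzero Q0).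
  move=> i x ex.
  have hN : @req _ N (@cdif _ X i 0 x) (rzero _).
    have [e|ne] := eqVneq i (0 - 1).
      subst i; split; [exact: (aelt (hom_additive (dX _ _)) ex)|exact: (m0 (HX _))|].
      exists x; split => //.
      refine (mtrans (HX _) (maddE (HX _) (aelt (hom_additive (dX _ _)) ex) (mopp0 (HX _))) _).
      exact: (madd0r (HX _) (aelt (hom_additive (dX _ _)) ex)).
    apply: (qrel_of_req (HX 0) (HX (0-1)) (dX (0-1) 0)).
    apply: zX => // e; move: ne; rewrite e; move/eqP; apply; lia.
  exact: (aeq0 HN HQ0 (hom_additive hphi) hN).
have P2 : forall i (x : car (cobj X i)), elt x -> i <> 0 -> req (psi (@cdif _ X i 1 x)) (rzero Q1).
  move=> i x ex ne.
  have h : req (@cdif _ X i 1 x) (rzero _) by apply: zX => // e; apply: ne; lia.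
  exact: (aeq0 (HX _) HQ1 (hom_additive hpsi) h).
have chF : is_chain F.
  split.
  - case=> [[|[|k]]|k] /=; [exact: hphiX|exact: hpsi| |];
      apply: hom_zero; exact: zero_rmod.
  - move=> i j; case: i => [[|[|i]]|i]; case: j => [[|[|j]]|j] //= x ex;
      first [exact: (P1 _ x ex) | exact: (epsi x ex) | by apply: P2].
have [K [hK1 eK]] := hK F chF.
have es0 : elt (s 0 x0 : car (cobj (trunc_le0 X) 0)) by case: (hs 0) => h1 _ _; exact: h1.
case: es0 => es0 _ Ps0.
refine (mtrans HQ0 (msym HQ0 (ephi x0 ex0 dx0)) _).
refine (mtrans HQ0 (eK 0 (s 0 x0) es0) _).
refine (mtrans HQ0 (maddE HQ0 (m0 HQ0) (aeq0 (HX _) HQ0 (hom_additive (hK1 (0 + 1) 0)) Ps0)) _).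
exact: (madd0l HQ0 (m0 HQ0)).
Qed.
End PartA.

Unset Implicit Arguments.

Section Fin.
Context {R : pzRingType}.

Lemma start (A Y : cplx R) (p : int) (f : cmap A Y) :
  is_complex A -> is_complex Y -> is_chain f -> injective_mod (cobj Y p) ->
  triv (cobj Y (p - 1)) -> (forall x : car (cobj A p), Defs.cycle x -> boundary x) ->
  exists H0 : car (cobj A (p + 1)) -> car (cobj Y p), is_hom H0 /\
    forall x, elt x -> req (f p x) (H0 (@cdif _ A p (p + 1) x)).
Proof.
move=> cA cY [hf fch] iY tr ac.
have [HA dA _ _] := cA; have [HY dY _ _] := cY.
have kz : forall x : car (cobj A p), Defs.cycle x -> req (f p x) (rzero _).
  move=> x cx.
  have [u [eu hu]] := ac x cx.
  refine (mtrans (HY p) (homE (hf p) hu) _).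
  refine (mtrans (HY p) (fch _ p u eu) _).
  exact: (aeq0 (HY _) (HY _) (hom_additive (dY _ _)) (tr _ _)).
have [h [hh hp]] := ext_d cA (HY p) iY (hf p) kz.
by exists h; split => // x ex; exact: (msym (HY p) (hp x ex)).
Qed.

Lemma kill_bd (A Y : cplx R) (p : int) (f : cmap A Y)
  (H0 : car (cobj A (p + 1)) -> car (cobj Y p)) :
  is_complex A -> is_complex Y -> is_chain f -> is_hom H0 ->
  (forall x, elt x -> req (f p x) (H0 (@cdif _ A p (p + 1) x))) ->
  forall v : car (cobj A p), elt v ->
    req (radd (f (p + 1) (@cdif _ A p (p + 1) v))
              (ropp (@cdif _ Y p (p + 1) (H0 (@cdif _ A p (p + 1) v))))) (rzero _).
Proof.
move=> [HA dA _ _] [HY dY _ _] [hf fch] hH c1 v ev.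
apply: (msubrr (HY _)).
refine (mtrans (HY _) (fch _ _ v ev) _).
exact: (homE (dY _ _) (c1 v ev)).
Qed.

Lemma finish (A Y : cplx R) (p : int) (f : cmap A Y)
  (H0 : car (cobj A (p + 1)) -> car (cobj Y p)) :
  is_complex A -> is_complex Y -> is_chain f -> injective_mod (cobj Y (p + 1)) ->
  (forall n, n <> p -> n <> p + 1 -> triv (cobj Y n)) -> is_hom H0 ->
  (forall x, elt x -> req (f p x) (H0 (@cdif _ A p (p + 1) x))) ->
  (forall x : car (cobj A (p + 1)), Defs.cycle x ->
     req (radd (f (p + 1) x) (ropp (@cdif _ Y p (p + 1) (H0 x)))) (rzero _)) ->
  null_homotopic f.
Proof.
move=> cA cY cf iY tr hH c1 kl.
have [HA dA _ _] := cA; have [HY dY _ _] := cY; have [hf fch] := cf.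
have hg : is_hom (fun x => radd (f (p + 1) x) (ropp (@cdif _ Y p (p + 1) (H0 x)))).
  apply: hom_sum => //; apply: hom_opp => //; exact: (hom_comp (HA _) (HY _) (HY _) hH (dY _ _)).
have [H1 [hH1 e1]] := ext_d cA (HY _) iY hg kl.
apply: (@null_two _ A Y p H0 H1 f cA cY hH hH1 tr).
  move=> x ex; exact: (c1 x ex).
move=> x ex.
have ea := homelt (hf (p + 1)) ex.
have eb := homelt (dY p (p + 1)) (homelt hH ex).
refine (mtrans (HY _) _ (maddE (HY _) (mrefl eb) (msym (HY _) (e1 x ex)))).
refine (mtrans (HY _) _ (maddC (HY _) (meltD (HY _) ea (meltN (HY _) eb)) eb)).
apply: (msym (HY _)); apply: (maddr_sub (HY _)) => //; exact: (meltD (HY _) ea (meltN (HY _) eb)).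
Qed.
End Fin.

Section PB.
Context {R : pzRingType}.

Lemma boundary_shift (A : cplx R) (q : int) (x : car (cobj A (q + 1))) : boundary x ->
  exists v : car (cobj A q), elt v /\ req x (@cdif _ A q (q + 1) v).
Proof.
case=> z; move: z; rewrite addrK => z [ez h]; by exists z.
Qed.

Lemma ge_neg (X : cplx R) n (x y : car (cobj X n)) : n < 0 ->
  @req _ (cobj (trunc_ge0 X) n) x y = (req x (rzero _) /\ req y (rzero _)).
Proof. by move=> hn /=; rewrite hn. Qed.

Lemma acyc_neg (X B : cplx R) (s : cmap B (trunc_ge0 X)) :
  is_complex X -> is_chain s -> quasi_iso s ->
  forall n, n < 0 -> forall y : car (cobj B n), Defs.cycle y -> boundary y.
Proof.
move=> [HX dX _ _] [hs _] qs n hn y cy.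
apply: (proj2 (qs n) y cy).
exists (rzero _); split.
  by rewrite /elt ge_neg; [split; exact: (m0 (HX _))|lia].
rewrite ge_neg //; split.
  by have := homelt (hs n) (proj1 cy); rewrite /elt ge_neg //; case.
exact: (a0 (HX _) (HX _) (hom_additive (dX _ _))).
Qed.

Variables (Q0 Q1 : rmod R) (zeta : car Q0 -> car Q1).

Lemma partB2 (X B : cplx R) (s : cmap B (trunc_ge0 X)) (i : int)
  (f : cmap B (shift (zeta_cplx zeta) i)) :
  is_rmod Q0 -> is_rmod Q1 -> injective_mod Q0 -> injective_mod Q1 -> is_hom zeta ->
  is_complex X -> is_complex B -> is_chain s -> quasi_iso s -> is_chain f -> 2 <= i ->
  null_homotopic f.
Proof.
move=> HQ0 HQ1 iQ0 iQ1 hz cX cB cs qs cf hi.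
have cY := shift_complex i (zeta_complex HQ0 HQ1 hz).
have ac := acyc_neg _ _ _ cX cs qs.
have [H0 [hH0 c1]] : exists H0 : car (cobj B (- i + 1)) -> car (cobj (shift (zeta_cplx zeta) i) (- i)),
    is_hom H0 /\ forall x, elt x -> req (f (- i) x) (H0 (@cdif _ B (- i) (- i + 1) x)).
  apply: start => //.
  - by rewrite shift_zeta_p.
  - apply: shift_zeta_triv; lia.
  - apply: ac; lia.
apply: (finish _ _ _ _ _ cB cY cf _ _ hH0 c1).
- by rewrite shift_zeta_p1.
- move=> n n1 n2; exact: shift_zeta_triv.
move=> x cx.
have [v [ev hv]] := boundary_shift _ _ _ (ac (- i + 1) ltac:(lia) x cx).
have [hf fch] := cf; have [HY dY _ _] := cY; have [HB _ _ _] := cB.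
have hg : is_hom (fun x => radd (f (- i + 1) x) (ropp (@cdif _ (shift (zeta_cplx zeta) i) (- i) (- i + 1) (H0 x)))).
  apply: (hom_sum (HB _) (HY _) (hf _)); apply: (hom_opp (HB _) (HY _)).
  exact: (hom_comp (HB _) (HY _) (HY _) hH0 (dY _ _)).
refine (mtrans (HY _) (homE hg hv) _).
exact: (kill_bd _ _ _ _ _ cB cY cf hH0 c1 _ ev).
Qed.
End PB.

Section PB1.
Context {R : pzRingType} (Q0 Q1 : rmod R) (zeta : car Q0 -> car Q1) (X B : cplx R).
Hypotheses (HQ0 : is_rmod Q0) (HQ1 : is_rmod Q1) (iQ0 : injective_mod Q0)
  (iQ1 : injective_mod Q1) (hz : is_hom zeta) (cX : is_complex X) (cB : is_complex B).
Variables (s : cmap B (trunc_ge0 X)) (f : cmap B (shift (zeta_cplx zeta) 1)).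
Hypotheses (cs : is_chain s) (cf : is_chain f) (qs : quasi_iso s)
  (hK : HomK_zero X (shift (zeta_cplx zeta) 1)).

Let Y := shift (zeta_cplx zeta) 1.
Let cY : is_complex Y := shift_complex 1 (zeta_complex HQ0 HQ1 hz).
Let HX := let: And4 h _ _ _ := cX in h.
Let dX := let: And4 _ h _ _ := cX in h.
Let zX := let: And4 _ _ h _ := cX in h.
Let HB := let: And4 h _ _ _ := cB in h.
Let dB := let: And4 _ h _ _ := cB in h.
Let HY := let: And4 h _ _ _ := cY in h.
Let dY := let: And4 _ h _ _ := cY in h.
Let zY := let: And4 _ _ h _ := cY in h.

Let N := restrict (@qrel _ (cobj X 0) (cobj X (0 - 1)) (@cdif _ X (0 - 1) 0)).
Let HN : is_rmod N := qrel_rmod (HX _) (HX _) (dX _ _).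

Lemma partB1 : null_homotopic f.
Proof.
have [hs sch] := cs; have [hf fch] := cf.
have ac := acyc_neg _ _ _ cX cs qs.
have [H0 [hH0 c1]] : exists H0 : car (cobj B (- 1 + 1)) -> car (cobj Y (- 1)),
    is_hom H0 /\ forall x, elt x -> req (f (- 1) x) (H0 (@cdif _ B (- 1) (- 1 + 1) x)).
  apply: start => //; apply: ac; lia.
have hs0 : @is_hom R (cobj B 0) N (s 0) := hs 0.
pose g' := fun x : car (cobj B 0) => radd (f 0 x) (ropp (@cdif _ Y (- 1) 0 (H0 x))).
have hg' : @is_hom R (cobj B 0) (cobj Y 0) g'.
  apply: (hom_sum (HB _) (HY _) (hf _)); apply: (hom_opp (HB _) (HY _)).
  exact: (hom_comp (HB _) (HY _) (HY _) hH0 (dY _ _)).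
pose D := fun x : car (cobj B 0) => req (@cdif _ B 0 (0 + 1) x) (rzero _).
have [phi [hphi ephi]] : exists phi : car N -> car (cobj Y 0), is_hom phi /\
    forall x, elt x -> D x -> req (phi (s 0 x)) (g' x).
  apply: (@ext_lemma R (cobj B 0) N (cobj Y 0) D (s 0) g') => //.
  - exact: (ker0 (HB _) (HB _) (dB _ _)).
  - by move=> x y ex ey; apply: (kerD (HB _) (HB _) (dB _ _)).
  - by move=> x ex; apply: (kerN (HB _) (HB _) (dB _ _)).
  - by move=> x r ex; apply: (kerA (HB _) (HB _) (dB _ _)).
  move=> x y ex ey Dx Dy hxy.
  pose u := radd x (ropp y).
  have eu : elt u := meltD (HB _) ex (meltN (HB _) ey).
  have Du : D u.
    by apply: (kerD (HB _) (HB _) (dB _ _)) => //; [exact: (meltN (HB _) ey)|apply: (kerN (HB _) (HB _) (dB _ _))].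
  have hsu : req (s 0 u : car N) (rzero N).
    refine (mtrans HN (aB (HB _) HN (hom_additive hs0) ex ey) _).
    exact: (msubrr HN hxy).
  have [v [ev hv]] : boundary u.
    apply: (proj2 (qs 0)); first by split.
    exists (rzero _); split.
      by rewrite /elt ge_neg //; split; exact: (m0 (HX _)).
    refine (mtrans HN hsu _).
    apply: (qrel_of_req (HX 0) (HX (0-1)) (dX (0-1) 0)).
    exact: (msym (HX _) (a0 (HX _) (HX _) (hom_additive (dX _ _)))).
  apply: (msub_eq0 (HY _) (homelt hg' ex) (homelt hg' ey)).
  refine (mtrans (HY _) (msym (HY _) (aB (HB _) (HY _) (hom_additive hg') ex ey)) _).
  refine (mtrans (HY _) (homE hg' hv) _).
  exact (kill_bd _ _ _ _ _ cB cY cf hH0 c1 v ev).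
have hphiX : @is_hom R (cobj X 0) (cobj Y 0) phi := hom_of_qhom (HX 0) (HX (0-1)) (dX (0-1) 0) hphi.
pose F : cmap X Y := fun n =>
  match n as n0 return car (cobj X n0) -> car (cobj Y n0) with
  | Posz O => phi
  | _ => fun _ => rzero _
  end.
have L1 : forall i (x : car (cobj X i)), elt x -> req (phi (@cdif _ X i 0 x)) (rzero _).
  move=> i x ex.
  have [e|ne] := eqVneq i (0 - 1).
    subst i; exact: (qhom_kills (HX 0) (HX (0-1)) (dX (0-1) 0) (HY _) hphi ex).
  apply: (aeq0 (HX _) (HY _) (hom_additive hphiX)).
  apply: zX => // e; move: ne; rewrite e; move/eqP; apply; lia.
have L2 : forall i j, req (rzero (cobj Y j)) (@cdif _ Y i j (rzero _)).
  move=> i j; exact: (msym (HY _) (a0 (HY _) (HY _) (hom_additive (dY _ _)))).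
have L3 : forall j (y : car (cobj Y 0)), elt y -> j <> 1 -> req (rzero (cobj Y j)) (@cdif _ Y 0 j y).
  move=> j y ey ne; apply: (msym (HY _)); apply: zY => //.
have T1 : forall k : nat, triv (cobj Y (Posz k.+1)).
  move=> k; apply: shift_zeta_triv; lia.
have chF : is_chain F.
  split.
  - case=> [[|k]|k]; [exact hphiX|exact (hom_zero _ (HY _))|exact (hom_zero _ (HY _))].
  - move=> i j; case: i => [[|i]|i]; case: j => [[|j]|j] x ex.
    + refine (mtrans (HY _) (L1 _ x ex) _); exact (L3 0 _ (homelt hphiX ex) ltac:(lia)).
    + exact (T1 j _ _).
    + exact (L3 (Negz j) _ (homelt hphiX ex) ltac:(lia)).
    + refine (mtrans (HY _) (L1 _ x ex) _); exact (L2 _ _).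
    + exact (L2 _ _).
    + exact (L2 _ _).
    + refine (mtrans (HY _) (L1 _ x ex) _); exact (L2 _ _).
    + exact (L2 _ _).
    + exact (L2 _ _).
have [K [hKh eK]] := hK F chF.
pose K0 : car (cobj X 0) -> car (cobj Y (0 - 1)) := K 0 (0 - 1).
have hK0 : @is_hom R (cobj X 0) (cobj Y (0 - 1)) K0 := hKh 0 (0 - 1).
have K0b : forall y : car (cobj X (0 - 1)), elt y -> req (K0 (@cdif _ X (0 - 1) 0 y)) (rzero _).
  move=> y ey.
  have h := eK (0 - 1) y ey.
  have ea : req (@cdif _ Y (0 - 1 - 1) (0 - 1) (K (0 - 1) (0 - 1 - 1) y)) (rzero _).
    apply: (aeq0 (HY _) (HY _) (hom_additive (dY _ _))); by [].
  have eb : elt (K0 (@cdif _ X (0 - 1) 0 y)).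
    exact: (homelt hK0 (homelt (dX _ _) ey)).
  apply: (msym (HY _)).
  refine (mtrans (HY _) h _).
  refine (mtrans (HY _) (maddE (HY _) ea eb) _).
  exact: (madd0l (HY _) eb).
have hK0N : @is_hom R N (cobj Y (0 - 1)) K0 := qhom_of_hom (HX 0) (HX (0-1)) (dX (0-1) 0) (HY _) hK0 K0b.
pose H0' := fun x : car (cobj B (- 1 + 1)) => radd (H0 x) (K0 (s 0 x)).
have hH0' : is_hom H0'.
  apply: (hom_sum (HB _) (HY _) hH0).
  exact: (hom_comp (HB 0) HN (HY _) hs0 hK0N).
have c1' : forall x, elt x -> req (f (- 1) x) (H0' (@cdif _ B (- 1) (- 1 + 1) x)).
  move=> u eu.
  have edu := homelt (dB (- 1) (- 1 + 1)) eu.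
  have esu : @elt _ (cobj X (0 - 1)) (s (- 1) u).
    by have := homelt (hs (- 1)) eu; rewrite /elt ge_neg //; case=> h _; exact: (meltl (HX _) h).
  have e1 : req (K0 (s 0 (@cdif _ B (- 1) (- 1 + 1) u))) (rzero _).
    refine (mtrans (HY _) (homE hK0N (sch (- 1) 0 u eu)) _).
    exact: (K0b _ esu).
  refine (mtrans (HY _) (c1 u eu) _).
  refine (mtrans (HY _) (msym (HY _) (madd0r (HY _) (homelt hH0 edu))) _).
  exact: (maddE (HY _) (mrefl (homelt hH0 edu)) (msym (HY _) e1)).
apply: (finish _ _ _ _ _ cB cY cf _ _ hH0' c1').
- exact iQ1.
- move=> n n1 n2; apply: shift_zeta_triv => //.
move=> x [ex dx].
have esx : @elt _ N (s 0 x) := homelt hs0 ex.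
have esxX : @elt _ (cobj X 0) (s 0 x) by case: esx.
have eg' := ephi x ex dx.
have hds : req (@cdif _ X 0 (0 + 1) (s 0 x)) (rzero _).
  have h1 : @req _ (cobj X (0 + 1)) (s (0 + 1) (@cdif _ B 0 (0 + 1) x)) (rzero _).
    exact: (aeq0 (HB _) (HX _) (hom_additive (hs (0 + 1))) dx).
  refine (mtrans (HX _) (msym (HX _) (sch 0 (0 + 1) x ex)) _); exact: h1.
have eK0 := eK 0 (s 0 x) esxX.
have e3 : req (K (0 + 1) 0 (@cdif _ X 0 (0 + 1) (s 0 x))) (rzero _).
  exact: (aeq0 (HX _) (HY _) (hom_additive (hKh (0 + 1) 0)) hds).
set a := f (- 1 + 1) x.
set b := @cdif _ Y (- 1) (- 1 + 1) (H0 x).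
set c := @cdif _ Y (- 1) (- 1 + 1) (K0 (s 0 x)).
have ea : elt a := homelt (hf _) ex.
have eb : elt b := homelt (dY _ _) (homelt hH0 ex).
have ec : elt c := homelt (dY _ _) (homelt hK0 esxX).
have habc : req (radd a (ropp b)) c.
  refine (mtrans (HY _) (msym (HY _) eg') _).
  refine (mtrans (HY _) eK0 _).
  refine (mtrans (HY _) (maddE (HY _) (mrefl ec) e3) _).
  exact: (madd0r (HY _) ec).
have hdH : req (@cdif _ Y (- 1) (- 1 + 1) (H0' x)) (radd b c).
  exact: (aD (hom_additive (dY _ _)) (homelt hH0 ex) (homelt hK0 esxX)).
refine (mtrans (HY _) (maddE (HY _) (mrefl ea) (moppE (HY _) hdH)) _).
refine (mtrans (HY _) (maddE (HY _) (mrefl ea) (moppD (HY _) eb ec)) _).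
refine (mtrans (HY _) (maddA (HY _) ea (meltN (HY _) eb) (meltN (HY _) ec)) _).
exact: (msubrr (HY _) habc).
Qed.
End PB1.

Section Final.
Context {R : pzRingType}.

Lemma acyc_pos (X B : cplx R) (s : cmap B (trunc_le0 X)) :
  is_complex X -> is_chain s -> quasi_iso s ->
  forall n, 0 < n -> forall y : car (cobj B n), Defs.cycle y -> boundary y.
Proof.
move=> cX [hs _] qs n hn y cy.
have [HX dX _ _] := cX.
apply: (proj2 (qs n) y cy).
exists (rzero _); split; first exact (Ele_0 cX _).
have [_ Ps _] := homelt (hs n) (proj1 cy).
split.
- refine (mtrans (HX _) (Ple_pos hn Ps) _).
  exact: (msym (HX _) (a0 (HX _) (HX _) (hom_additive (dX _ _)))).
- exact Ps.
- exact (Ple_d cX n (m0 (HX _)) (Ple0 cX _)).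
Qed.

Lemma id_chain (A : cplx R) : is_complex A -> is_chain (fun n (x : car (cobj A n)) => x).
Proof.
move=> [HA dA _ _]; split; first by move=> n; exact: hom_id.
move=> i j x ex; exact: (homelt (dA _ _) ex).
Qed.

Lemma id_qiso (A : cplx R) : is_complex A -> quasi_iso (fun n (x : car (cobj A n)) => x).
Proof.
move=> [HA dA _ _] n; split; last by [].
move=> y [ey dy]; exists y; split => //.
exists (rzero _); split; first exact: (m0 (HA _)).
refine (mtrans (HA _) (maddN (HA _) ey) _).
exact: (msym (HA _) (a0 (HA _) (HA _) (hom_additive (dA _ _)))).
Qed.

Theorem lemma2p9' (Q0 Q1 : rmod R) (zeta : car Q0 -> car Q1) (X : cplx R) :
  is_rmod Q0 -> is_rmod Q1 -> injective_mod Q0 -> injective_mod Q1 ->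
  is_hom zeta -> is_complex X ->
  (HomK_zero X (zeta_cplx zeta) ->
     forall i : int, i <= 0 -> HomD_zero (trunc_le0 X) (shift (zeta_cplx zeta) i)) /\
  (HomK_zero X (shift (zeta_cplx zeta) 1) ->
     forall i : int, 1 <= i -> HomD_zero (trunc_ge0 X) (shift (zeta_cplx zeta) i)).
Proof.
move=> HQ0 HQ1 iQ0 iQ1 hz cX; split.
- move=> hK i hi A s f cA cs cf qs.
  have cY := shift_complex i (zeta_complex HQ0 HQ1 hz).
  have [HY dY _ _] := cY.
  have [hf _] := cf; have [HA _ _ _] := cA.
  have cTA := trunc_le0_complex cA.
  exists (trunc_le0 A), (@tid _ A); split.
  + exact: cTA.
  + exact: (tid_chain cA).
  + apply: (tid_qiso cA); exact: (acyc_pos _ _ _ cX cs qs).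
  + apply: (@null_two _ (trunc_le0 A) (shift (zeta_cplx zeta) i) (- i)
             (fun _ => rzero _) (fun _ => rzero _)).
    * exact: cTA.
    * exact: cY.
    * exact: (hom_zero _ (HY _)).
    * exact: (hom_zero _ (HY _)).
    * by move=> n n1 n2; apply: shift_zeta_triv.
    * move=> x [ex Px _].
      have [e|ne] := eqVneq i 0.
        subst i.
        exact (partA0 Q0 Q1 zeta X A HQ0 HQ1 iQ0 iQ1 hz cX cA s f cs cf qs hK x (conj ex Px)).
      have hp : 0 < - i by lia.
      exact (aeq0 (HA _) (HY _) (hom_additive (hf _)) (Ple_pos hp Px)).
    * move=> x [ex Px _].
      have hp : 0 < - i + 1 by lia.
      refine (mtrans (HY _) (aeq0 (HA _) (HY _) (hom_additive (hf _)) (Ple_pos hp Px)) _).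
      apply: (msym (HY _)).
      refine (mtrans (HY _) (maddE (HY _) (a0 (HY _) (HY _) (hom_additive (dY _ _))) (m0 (HY _))) _).
      exact: (madd0l (HY _) (m0 (HY _))).
- move=> hK i hi A s f cA cs cf qs.
  exists A, (fun n x => x); split.
  + exact: cA.
  + exact: (id_chain A cA).
  + exact: (id_qiso A cA).
  + have [e|ne] := eqVneq i 1.
      subst i.
      exact (partB1 Q0 Q1 zeta X A HQ0 HQ1 iQ0 iQ1 hz cX cA s f cs cf qs hK).
    apply: (partB2 Q0 Q1 zeta X A s i f) => //; lia.
Qed.
End Final.


Theorem lemma2p9 (R : pzRingType) (Q0 Q1 : rmod R) (zeta : car Q0 -> car Q1)
    (X : cplx R) :
  is_rmod Q0 -> is_rmod Q1 -> injective_mod Q0 -> injective_mod Q1 ->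
  is_hom zeta -> is_complex X ->
  (HomK_zero X (zeta_cplx zeta) ->
     forall i : int, i <= 0 -> HomD_zero (trunc_le0 X) (shift (zeta_cplx zeta) i)) /\
  (HomK_zero X (shift (zeta_cplx zeta) 1) ->
     forall i : int, 1 <= i -> HomD_zero (trunc_ge0 X) (shift (zeta_cplx zeta) i)).
Proof. exact: (@lemma2p9' R Q0 Q1 zeta X). Qed.
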